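(* Consider the inner-loop system $x_2(k+1)=A_2x_2(k)+B_2u(k)$ with $x_2\in\mathbb{R}^{n_2}$, together with an inner-loop predictive controller operating as follows. At each time $k$ the inner loop receives a predicted reference-model trajectory $\mathbf{x_f}(k)=[\mathbf{x_f}(k|k),\dots,\mathbf{x_f}(k+N|k)]$ and chooses an input trajectory $\mathbf{u}(k)=[\mathbf{u}(k|k),\dots,\mathbf{u}(k+N-1|k)]$; the predicted states are $\mathbf{x_2}(k|k)=x_2(k)$, $\mathbf{x_2}(k+i+1|k)=A_2\mathbf{x_2}(k+i|k)+B_2\mathbf{u}(k+i|k)$, and $\mathbf{\tilde x}(k+i|k)=\mathbf{x_2}(k+i|k)-\mathbf{x_f}(k+i|k)$; the input applied at time $k$ is $u(k)=\mathbf{u}(k|k)$. Let $G_2=\{\tilde x\in\mathbb{R}^{n_2}:\tilde x^TP\tilde x\le V_2^*\}$ with $P$ symmetric positive definite and $V_2^*>0$, and let $\lambda_2\in[0,1)$. Suppose that, given $\mathbf{x_f}(k)$, a trajectory $\mathbf{u}(k)$ is computed that yields $\mathbf{\tilde x}(k+N|k)\in\lambda_2G_2$. Then there exists $\epsilon_{x_f}^{max}>0$ such that if $\|\mathbf{x_f}(k+N|k+1)-\mathbf{x_f}(k+N|k)\|\le\epsilon_{x_f}^{max}$ and $\mathbf{u}(k+i|k+1)=\mathbf{u}(k+i|k)$ for $i=1,\dots,N-1$, then $\mathbf{\tilde x}(k+N|k+1)\in G_2$.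
   Context: $\lambda_2G_2=\{\lambda_2x:x\in G_2\}$. The notation $(i|k)$ denotes the value of a variable at step $i$ predicted/chosen by the optimization carried out at time $k$; $N\ge 2$ is the prediction horizon. *)

(* Defs.v *)
From HB Require Import structures.
From mathcomp Require Import all_boot all_order all_algebra.
From mathcomp Require Import reals.
Set Implicit Arguments. Unset Strict Implicit. Unset Printing Implicit Defensive.
Import Order.TTheory GRing.Theory Num.Theory.
Local Open Scope ring_scope.

Definition vnorm (R : realType) (n : nat) (x : 'cV[R]_n) : R :=
  Num.sqrt (\sum_(i < n) x i 0 ^+ 2).

Definition qform (R : realType) (n : nat) (P : 'M[R]_n) (x : 'cV[R]_n) : R :=
  (x^T *m P *m x) 0 0.

Definition spd (R : realType) (n : nat) (P : 'M[R]_n) : Prop :=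
  P^T = P /\ forall x : 'cV[R]_n, x != 0 -> 0 < qform P x.

Definition inG (R : realType) (n : nat) (P : 'M[R]_n) (V : R) (x : 'cV[R]_n) : Prop :=
  qform P x <= V.

Definition in_scaledG (R : realType) (n : nat) (lam : R) (P : 'M[R]_n) (V : R)
  (x : 'cV[R]_n) : Prop :=
  exists y, inG P V y /\ x = lam *: y.

(* Predicted state: pred_state A B x0 u i = x2(k+i|k) when x2(k|k) = x0 and
   u j = u(k+j|k). *)
Fixpoint pred_state (R : realType) (n m : nat) (A : 'M[R]_n) (B : 'M[R]_(n, m))
  (x0 : 'cV[R]_n) (u : nat -> 'cV[R]_m) (i : nat) : 'cV[R]_n :=
  match i with
  | 0 => x0
  | i'.+1 => A *m pred_state A B x0 u i' + B *m u i'
  end.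

(* Main.v *)
Require Import Defs.
From HB Require Import structures.
From mathcomp Require Import all_boot all_order all_algebra.
From mathcomp Require Import reals.
From mathcomp Require Import ring lra.
Import Order.TTheory GRing.Theory Num.Theory.
Local Open Scope ring_scope.

Section Helpers.
Local Set Implicit Arguments.
Local Unset Strict Implicit.

Lemma pred_shift (R : realType) n m (A : 'M[R]_n) (B : 'M[R]_(n, m)) x0 u u' k :
  (forall j, (j < k)%N -> u' j = u j.+1) ->
  pred_state A B (A *m x0 + B *m u 0%N) u' k = pred_state A B x0 u k.+1.
Proof.
elim: k => [//|k IH] H /=.
rewrite IH; last by move=> j Hj; apply: H; apply: ltnW.
by rewrite H.
Qed.

Lemma entry_vnorm (R : realType) n (z : 'cV[R]_n) j : `|z j 0| <= vnorm z.
Proof.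
rewrite /vnorm -sqrtr_sqr ler_sqrt; last by apply: sumr_ge0 => i _; apply: sqr_ge0.
rewrite (bigD1 j) //= lerDl; apply: sumr_ge0 => i _; apply: sqr_ge0.
Qed.

Lemma bil_core (R : realType) n (P : 'M[R]_n) (x z : 'cV[R]_n) :
  `|(x^T *m P *m z) 0 0| <= \sum_j \sum_i `|x i 0| * `|P i j| * `|z j 0|.
Proof.
rewrite mxE; apply: (le_trans (ler_norm_sum _ _ _)); apply: ler_sum => j _.
rewrite mxE normrM; apply: (le_trans (ler_wpM2r (normr_ge0 _) (ler_norm_sum _ _ _))).
rewrite mulr_suml; apply: ler_sum => i _; rewrite mxE normrM.
by [].
Qed.

Lemma bil1 (R : realType) n (P : 'M[R]_n) (x z : 'cV[R]_n) :
  `|(x^T *m P *m z) 0 0| <= (\sum_j \sum_i `|x i 0| * `|P i j|) * vnorm z.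
Proof.
apply: le_trans (bil_core P x z) _; rewrite mulr_suml; apply: ler_sum => j _.
rewrite mulr_suml; apply: ler_sum => i _.
apply: ler_wpM2l; first by rewrite mulr_ge0.
exact: entry_vnorm.
Qed.

Lemma bil2 (R : realType) n (P : 'M[R]_n) (x z : 'cV[R]_n) :
  `|(x^T *m P *m z) 0 0| <= (\sum_j \sum_i `|P i j| * `|z j 0|) * vnorm x.
Proof.
apply: le_trans (bil_core P x z) _; rewrite mulr_suml; apply: ler_sum => j _.
rewrite mulr_suml; apply: ler_sum => i _.
rewrite -mulrA mulrC; apply: ler_wpM2l; first by rewrite mulr_ge0.
exact: entry_vnorm.
Qed.

Lemma bil3 (R : realType) n (P : 'M[R]_n) (z : 'cV[R]_n) :
  `|(z^T *m P *m z) 0 0| <= (\sum_j \sum_i `|P i j|) * (vnorm z * vnorm z).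
Proof.
apply: le_trans (bil_core P z z) _; rewrite mulr_suml; apply: ler_sum => j _.
rewrite mulr_suml; apply: ler_sum => i _.
rewrite [_ * `|P i j|]mulrC -mulrA; apply: ler_wpM2l => //.
apply: ler_pM; [exact: normr_ge0| exact: normr_ge0 | exact: entry_vnorm| exact: entry_vnorm].
Qed.

Lemma qformB (R : realType) n (P : 'M[R]_n) (x w : 'cV[R]_n) :
  qform P (x - w) = qform P x - (x^T *m P *m w) 0 0 - (w^T *m P *m x) 0 0
     + qform P w.
Proof.
rewrite /qform.
have -> : (x - w)^T = x^T - w^T by apply/matrixP=> i j; rewrite !mxE.
rewrite mulmxBl mulmxBr !mulmxBl !mxE.
ring.
Qed.

Lemma qformZ (R : realType) n (P : 'M[R]_n) (a : R) (y : 'cV[R]_n) :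
  qform P (a *: y) = a ^+ 2 * qform P y.
Proof.
rewrite /qform.
have -> : (a *: y)^T = a *: y^T by apply/matrixP=> i j; rewrite !mxE.
rewrite -scalemxAl -scalemxAl -scalemxAr scalerA mxE expr2 //.
Qed.

End Helpers.

Theorem proposition6 (R : realType) (n2 m N : nat)
  (A2 : 'M[R]_n2) (B2 : 'M[R]_(n2, m)) (P : 'M[R]_n2) (V2 lam2 : R)
  (x2k : 'cV[R]_n2) (xf_k : nat -> 'cV[R]_n2) (u_k : nat -> 'cV[R]_m) :
  (2 <= N)%N ->
  spd P -> 0 < V2 ->
  0 <= lam2 -> lam2 < 1 ->
  in_scaledG lam2 P V2 (pred_state A2 B2 x2k u_k N - xf_k N) ->
  exists eps : R, 0 < eps /\
    forall (xf_k1 : nat -> 'cV[R]_n2) (u_k1 : nat -> 'cV[R]_m),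
      let x2k1 := A2 *m x2k + B2 *m u_k 0%N in
      vnorm (xf_k1 (N.-1) - xf_k N) <= eps ->
      (forall i : nat, (1 <= i <= N.-1)%N -> u_k1 i.-1 = u_k i) ->
      inG P V2 (pred_state A2 B2 x2k1 u_k1 N.-1 - xf_k1 N.-1).
Proof.
move=> HN [Psym Ppos] HV hl0 hl1 [y [Gy He]].
set e := pred_state A2 B2 x2k u_k N - xf_k N in He *.
set K1 := \sum_j \sum_i `|e i 0| * `|P i j|.
set K2 := \sum_j \sum_i `|P i j| * `|e j 0|.
set S := \sum_j \sum_i `|P i j|.
have K1ge : 0 <= K1 by apply: sumr_ge0 => j _; apply: sumr_ge0 => i _; rewrite mulr_ge0.
have K2ge : 0 <= K2 by apply: sumr_ge0 => j _; apply: sumr_ge0 => i _; rewrite mulr_ge0.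
have Sge : 0 <= S by apply: sumr_ge0 => j _; apply: sumr_ge0 => i _.
set d := (1 - lam2 ^+ 2) * V2.
have dpos : 0 < d by rewrite /d; apply: mulr_gt0 => //; nra.
set D := K1 + K2 + S + d + 1.
have Dpos : 0 < D by rewrite /D; lra.
have epsD : d / D * D = d by rewrite mulfVK // gt_eqF.
exists (d / D); split; first by apply: divr_gt0.
move=> xf1 u1 x2k1 Hn Hu.
have N0 : (0 < N)%N by apply: leq_trans HN.
rewrite /x2k1 pred_shift; last first.
  move=> j Hj; have := Hu j.+1; rewrite /= => -> //.
rewrite prednK //.
have -> : pred_state A2 B2 x2k u_k N - xf1 N.-1 = e - (xf1 N.-1 - xf_k N).
  by rewrite /e opprB addrA subrK.
set w := xf1 N.-1 - xf_k N in Hn *.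
set t := vnorm w in Hn *.
set eps := d / D in Hn epsD *.
have t0 : 0 <= t by rewrite /t /vnorm sqrtr_ge0.
have eps1 : eps <= 1 by rewrite /eps ler_pdivrMr // mul1r /D; lra.
rewrite /inG qformB.
have Hqe : qform P e <= lam2 ^+ 2 * V2.
  by rewrite He qformZ; apply: ler_wpM2l; [exact: sqr_ge0 | exact: Gy].
have := bil1 P e w; rewrite -/K1 -/t ler_norml => /andP[H1 _].
have := bil2 P w e; rewrite -/K2 -/t ler_norml => /andP[H2 _].
have := bil3 P w; rewrite -/S -/t ler_norml => /andP[_ H3].
have h1 : S * (t * t) <= S * t by apply: ler_wpM2l => //; nra.
have h2 : (K1 + K2 + S) * t <= (K1 + K2 + S) * eps by apply: ler_wpM2l => //; lra.
have h3 : (K1 + K2 + S) * eps <= eps * D by rewrite [eps * D]mulrC; apply: ler_wpM2r; [lra | rewrite /D; lra].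
rewrite /d in epsD.
rewrite mulrBl mul1r in epsD.
rewrite [qform P w]/qform.
clear -Hqe H1 H2 H3 h1 h2 h3 epsD Hn t0 eps1.
move: Hqe H1 H2 H3 h1 h2 h3 epsD Hn t0 eps1.
move: (qform P e) ((e^T *m P *m w) 0 0) ((w^T *m P *m e) 0 0) ((w^T *m P *m w) 0 0).
clearbody K1 K2 S t eps D.
move: K1 K2 S t eps D => a b c tt ee DD q1 q2 q3 q4.
lra.
Qed.
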